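(* For each $\alpha>0$ let $X_\alpha=(x_1,x_2,x_3)$ be as in the context, and set $y_1=x_1$, $y_2=x_2$, $y_3=x_3+\frac{x_1x_2}{2}$, viewed as functions of $(u,v)$. Let $(\hat u,\hat v)\in\mathbb{R}^2$, and for $\alpha>0$ let $u_\alpha=\frac{\hat u}{\alpha}$ and $v_\alpha=\frac{4\ln\alpha+\hat v}{2\alpha}$. Then, as $\alpha\to+\infty$, $$y_1(u_\alpha,v_\alpha)\to\frac{\sin\hat u}{4}e^{\hat v/2},\qquad y_2(u_\alpha,v_\alpha)\to0,\qquad y_3(u_\alpha,v_\alpha)\to-\frac{\cos\hat u}{4}e^{\hat v/2}.$$
   Context: $\mathrm{Nil}_3$ is $\mathbb{R}^3$ with the metric $dx_1^2+dx_2^2+\big(dx_3+\tfrac12(x_2dx_1-x_1dx_2)\big)^2$. For $\alpha>0$ and $\theta\in\mathbb{R}$ set $C_{\alpha,\theta}=\frac{\sin(2\theta)}{2\alpha}$ and $P_{\alpha,\theta}(x)=\alpha^2+\cos(2\theta)x^2-C_{\alpha,\theta}^2x^4$. Let $\theta^+_\alpha=\pi/2$ if $\alpha>1$, and $\theta^+_\alpha=\frac12\arccos(1-2\alpha^2)$ if $\alpha\le1$. Let $$L(\alpha,\theta)=\int_{-1}^1\frac{2\alpha C_{\alpha,\theta}^2x^2-\alpha\cos(2\theta)+C_{\alpha,\theta}^2x^2\sqrt{P_{\alpha,\theta}(x)}}{\sqrt{(1-x^2)P_{\alpha,\theta}(x)}(\alpha+\sqrt{P_{\alpha,\theta}(x)})}dx.$$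 Let $\theta=\tilde\theta_\alpha$ be the unique $\theta\in(0,\theta^+_\alpha)\cap(0,\pi/4)$ with $L(\alpha,\theta)=0$, and $C=C_{\alpha,\theta}$. Let $\varphi$ solve $\varphi'^2=P_{\alpha,\theta}(\cos\varphi)$ with $\varphi(0)=0$ and $\varphi'(0)\le0$. Define $\beta'=C\cos^2\varphi$ with $\beta(0)=0$, and $G'=\frac{C^2\cos^2\varphi-\cos 2\theta}{\alpha-\varphi'}$ with $G(0)=0$. Put $A=\alpha v+\beta(u)$ and $X_\alpha(u,v)=(x_1,x_2,x_3)$ with $x_1=\frac{G'}{\alpha}\cos\varphi\sinh A-\frac C\alpha\sin\varphi\cosh A$, $x_2=Cv-G$, $x_3=-\frac{x_1x_2}2+\frac C\alpha(\frac{G'}{\alpha}-1)\cos\varphi\cosh A-\frac1\alpha(\frac{C^2}\alpha+G')\sin\varphi\sinh A$, where $\varphi,G,G'$ are evaluated at $u$. All these quantities depend on $\alpha$. *)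

(* Defs.v *)
From Stdlib Require Import Reals Lra ClassicalEpsilon.
From Coquelicot Require Import Coquelicot.
Open Scope R_scope.

Definition Cc (a th : R) : R := sin (2 * th) / (2 * a).

Definition Pp (a th x : R) : R := a ^ 2 + cos (2 * th) * x ^ 2 - (Cc a th) ^ 2 * x ^ 4.

Definition theta_plus (a : R) : R :=
  if Rlt_dec 1 a then PI / 2 else acos (1 - 2 * a ^ 2) / 2.

Definition L_integrand (a th x : R) : R :=
  (2 * a * (Cc a th) ^ 2 * x ^ 2 - a * cos (2 * th)
     + (Cc a th) ^ 2 * x ^ 2 * sqrt (Pp a th x))
  / (sqrt ((1 - x ^ 2) * Pp a th x) * (a + sqrt (Pp a th x))).

Definition L_vanishes (a th : R) : Prop :=
  is_RInt_gen (L_integrand a th) (at_right (-1)) (at_left 1) 0.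

Definition theta_admissible (a th : R) : Prop :=
  0 < th < theta_plus a /\ 0 < th < PI / 4 /\ L_vanishes a th.

Definition theta_tilde (a : R) : R :=
  epsilon (inhabits 0)
    (fun th => theta_admissible a th /\
               forall th', theta_admissible a th' -> th' = th).

Definition CC (a : R) : R := Cc a (theta_tilde a).

Definition is_phi (a : R) (phi : R -> R) : Prop :=
  (forall u, ex_derive phi u /\
     (Derive phi u) ^ 2 = Pp a (theta_tilde a) (cos (phi u)))
  /\ phi 0 = 0 /\ Derive phi 0 <= 0.

Definition Gp (a : R) (phi : R -> R) (u : R) : R :=
  ((CC a) ^ 2 * (cos (phi u)) ^ 2 - cos (2 * theta_tilde a)) / (a - Derive phi u).

Definition Gf (a : R) (phi : R -> R) (u : R) : R := RInt (Gp a phi) 0 u.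

Definition betaf (a : R) (phi : R -> R) (u : R) : R :=
  RInt (fun s => CC a * (cos (phi s)) ^ 2) 0 u.

Definition Af (a : R) (phi : R -> R) (u v : R) : R := a * v + betaf a phi u.

Definition x1 (a : R) (phi : R -> R) (u v : R) : R :=
  Gp a phi u / a * cos (phi u) * sinh (Af a phi u v)
  - CC a / a * sin (phi u) * cosh (Af a phi u v).

Definition x2 (a : R) (phi : R -> R) (u v : R) : R := CC a * v - Gf a phi u.

Definition x3 (a : R) (phi : R -> R) (u v : R) : R :=
  - (x1 a phi u v * x2 a phi u v) / 2
  + CC a / a * (Gp a phi u / a - 1) * cos (phi u) * cosh (Af a phi u v)
  - 1 / a * ((CC a) ^ 2 / a + Gp a phi u) * sin (phi u) * sinh (Af a phi u v).

Definition y1 (a : R) (phi : R -> R) (u v : R) : R := x1 a phi u v.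
Definition y2 (a : R) (phi : R -> R) (u v : R) : R := x2 a phi u v.
Definition y3 (a : R) (phi : R -> R) (u v : R) : R :=
  x3 a phi u v + x1 a phi u v * x2 a phi u v / 2.

(* Main.v *)
Require Import Defs.
From Stdlib Require Import Reals Lra Psatz ClassicalEpsilon.
From Coquelicot Require Import Coquelicot.
Open Scope R_scope.

Definition Kf (a c w : R) : R := (1 - c^2) * w / (4 * a^2).
Definition Pf (a c w : R) : R := a^2 + c * w - Kf a c w * w.
Definition pf (a c w : R) : R := sqrt (Pf a c w).
Definition gf (a c w : R) : R :=
  (2 * Kf a c w - c) / pf a c w + (c - Kf a c w) / (a + pf a c w).

Record hyp (a c w : R) : Prop := Hyp {
  ha : 10 <= a; hc1 : -1 <= c; hc2 : c <= 1; hw1 : 0 <= w; hw2 : w <= 1 }.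

Lemma Kf_e a c w : 0 < a -> Kf a c w = (1 - c^2) * w * (/a)^2 / 4.
Proof. intros; unfold Kf; field; lra. Qed.

Lemma Kf_bnd a c w : hyp a c w -> 0 <= Kf a c w <= (/a)^2/4.
Proof.
intros [H1 H2 H3 H4 H5]. rewrite Kf_e by lra.
assert (0 <= (/a)^2) by (pose proof (pow2_ge_0 (/a)); lra).
assert (0 <= 1 - c^2 <= 1) by nra.
assert (0 <= (1 - c^2) * w <= 1) by nra. assert (0 <= (1 - c^2) * w * (/a)^2 <= (/a)^2) by nra. lra.
Qed.

Lemma inva_bnd a : 10 <= a -> 0 < /a <= 1/10 /\ a * /a = 1.
Proof.
intros. split; [split|].
- apply Rinv_0_lt_compat; lra.
- unfold Rdiv. rewrite Rmult_1_l. apply Rinv_le_contravar; lra.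
- field; lra.
Qed.

Lemma Pf_bnd a c w : hyp a c w -> a^2 - 3/2 <= Pf a c w <= a^2 + 1.
Proof.
intros H. pose proof (Kf_bnd _ _ _ H) as [K1 K2]. destruct H as [H1 H2 H3 H4 H5].
destruct (inva_bnd a H1) as [[E1 E2] E3].
unfold Pf. assert ((/a)^2/4 <= 1) by nra. assert (-1 <= c * w <= 1) by nra. assert (0 <= Kf a c w * w <= 1/2) by nra. split; nra.
Qed.

Lemma pf_bnd a c w : hyp a c w ->
  0 < pf a c w /\ a - /a <= pf a c w <= a + /a /\ pf a c w ^2 = Pf a c w.
Proof.
intros H. pose proof (Pf_bnd _ _ _ H) as [P1 P2]. pose proof (ha _ _ _ H) as H1.
destruct (inva_bnd a H1) as [[E1 E2] E3].
assert (Hp : 0 < Pf a c w) by nra.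
assert (Hs : pf a c w ^ 2 = Pf a c w).
{ unfold pf. rewrite <- Rsqr_pow2. apply Rsqr_sqrt. lra. }
assert (0 <= pf a c w) by (apply sqrt_pos).
split; [|split; [split|exact Hs]].
- unfold pf; apply sqrt_lt_R0; lra.
- assert (0 <= a - /a) by nra. nra.
- nra.
Qed.

Definition dgf (a c w : R) : R :=
  let K := Kf a c w in let Kd := - c * w / (2*a^2) in let p := pf a c w in
  let pd := (w - Kd*w)/(2*p) in
  (2*Kd - 1)/p - (2*K - c)*pd/p^2 + (1 - Kd)/(a+p) - (c - K)*pd/(a+p)^2.

Lemma is_derive_Pf a c w : 0 < a -> is_derive (fun c => Pf a c w) c (w + c*w*w/(2*a^2)).
Proof. intros. unfold Pf, Kf. auto_derive. - auto. - field. lra. Qed.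

Lemma is_derive_gf a c w : hyp a c w -> is_derive (fun c => gf a c w) c (dgf a c w).
Proof.
intros H. pose proof (pf_bnd _ _ _ H) as [P1 [P2 P3]]. pose proof (ha _ _ _ H).
pose proof (Pf_bnd _ _ _ H).
assert (HP : 0 < Pf a c w) by nra.
assert (HD := is_derive_Pf a c w ltac:(lra)).
unfold gf, dgf, pf, Kf. auto_derive;
 (match goal with |- context [sqrt ?X] => replace X with (Pf a c w) by (unfold Pf, Kf; field; lra) end);
 fold (pf a c w); unfold Kf.
- repeat split; try lra; eexists; exact HD.
- replace (Derive (fun x : R => Pf a x w) c) with (w + c*w*w/(2*a^2)) by (symmetry; apply is_derive_unique; exact HD).
  set (p := pf a c w) in *. field. lra.
Qed.

Lemma dg_alg (e K Kd pd ip iq c : R) :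
  0 < e <= 1/10 -> 0 <= K <= e^2/4 -> -(e^2/2) <= Kd <= e^2/2 -> -1 <= c <= 1 ->
  0 <= pd <= ip -> 99/100*e <= ip <= 102/100*e -> 49/100*e <= iq <= 51/100*e ->
  let T := (2*Kd - 1)*ip - (2*K - c)*pd*ip^2 + (1 - Kd)*iq - (c - K)*pd*iq^2 in
  -2*e <= T <= -e/4.
Proof.
intros He HK HKd Hc Hpd Hip Hiq T.
assert (E2 : e^2 <= 1/100) by nra.
assert (A1 : (2*Kd - 1)*ip <= -(98/100)*e) by nra.
assert (A1' : -(104/100)*e <= (2*Kd - 1)*ip) by nra.
assert (Ip2 : 0 <= ip^2 <= (102/100*e)^2) by (split; nra).
assert (B0 : 0 <= pd*ip^2 <= (102/100*e)^3).
{ split; [apply Rmult_le_pos; lra|]. replace ((102/100*e)^3) with ((102/100*e)*(102/100*e)^2) by ring.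
  apply Rmult_le_compat; lra. }
assert (B1 : Rabs (2*K - c) <= 101/100) by (apply Rabs_le; nra).
assert (B2 : Rabs ((2*K - c)*pd*ip^2) <= 101/100 * (102/100*e)^3).
{ rewrite Rmult_assoc, Rabs_mult. rewrite (Rabs_right (pd*ip^2)) by lra.
  apply Rmult_le_compat; try lra; apply Rabs_pos. }
assert (C1 : 0 <= (1 - Kd)*iq <= 52/100*e) by (split; nra).
assert (Iq2 : 0 <= iq^2 <= (51/100*e)^2) by (split; nra).
assert (D0 : 0 <= pd*iq^2 <= (102/100*e)*(51/100*e)^2).
{ split; [apply Rmult_le_pos; lra|]. apply Rmult_le_compat; lra. }
assert (D1 : Rabs (c - K) <= 101/100) by (apply Rabs_le; nra).
assert (D2 : Rabs ((c - K)*pd*iq^2) <= 101/100 * ((102/100*e)*(51/100*e)^2)).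
{ rewrite Rmult_assoc, Rabs_mult. rewrite (Rabs_right (pd*iq^2)) by lra.
  apply Rmult_le_compat; try lra; apply Rabs_pos. }
apply Rabs_le_between in B2. apply Rabs_le_between in D2.
assert (e^3 <= e/100) by nra.
unfold T. split; nra.
Qed.

Lemma inv_bnds a p : 10 <= a -> a - /a <= p <= a + /a ->
  99/100*(/a) <= /p <= 102/100*(/a) /\ 49/100*(/a) <= /(a+p) <= 51/100*(/a).
Proof.
intros Ha Hp. destruct (inva_bnd a Ha) as [[E1 E2] E3]. set (e := /a) in *.
assert (Pp : 0 < p) by nra.
assert (I1 : p * /p = 1) by (field; lra).
assert (I2 : (a+p) * /(a+p) = 1) by (field; lra).
assert (0 < /p) by (apply Rinv_0_lt_compat; lra).
assert (0 < /(a+p)) by (apply Rinv_0_lt_compat; lra).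
assert (e*p <= 101/100) by nra.
assert (e*p >= 99/100) by nra.
assert (e*(a+p) <= 202/100) by nra.
assert (e*(a+p) >= 198/100) by nra.
split; split; nra.
Qed.

Lemma dgf_bnd a c w : hyp a c w -> -2*(/a) <= dgf a c w <= -(/a)/4.
Proof.
intros H. pose proof (pf_bnd _ _ _ H) as [P1 [P2 P3]]. pose proof (ha _ _ _ H) as Ha.
pose proof (Kf_bnd _ _ _ H) as HK. destruct H as [_ Hc1 Hc2 Hw1 Hw2].
destruct (inva_bnd a Ha) as [[E1 E2] E3].
destruct (inv_bnds a (pf a c w) Ha P2) as [Ip Iq].
set (p := pf a c w) in *. set (K := Kf a c w) in *.
set (Kd := - c * w / (2*a^2)).
assert (HKd : Kd = - c * w * (/a)^2 / 2) by (unfold Kd; field; lra).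
assert (0 <= (/a)^2 <= 1/100) by nra.
assert (BKd : -((/a)^2/2) <= Kd <= (/a)^2/2).
{ rewrite HKd. assert (-1 <= c*w <= 1) by nra. split; nra. }
set (pd := (w - Kd*w)/(2*p)).
assert (Hpd : pd = ((w - Kd*w)/2) * /p) by (unfold pd; field; lra).
assert (0 <= (w - Kd*w)/2 <= 1) by (split; nra).
assert (Bpd : 0 <= pd <= /p) by (rewrite Hpd; split; nra).
pose proof (dg_alg (/a) K Kd pd (/p) (/(a+p)) c ltac:(lra) HK BKd ltac:(lra) Bpd Ip Iq) as HT.
cbv zeta in HT.
replace (dgf a c w) with ((2*Kd - 1)*/p - (2*K - c)*pd*(/p)^2 + (1 - Kd)*/(a+p) - (c - K)*pd*(/(a+p))^2).
- lra.
- unfold dgf. fold p K. fold Kd. fold pd. field. split; lra.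
Qed.

Lemma cont_of_derive f x : ex_derive f x -> continuity_pt f x.
Proof. intros H. apply continuity_pt_filterlim. apply (ex_derive_continuous f x H). Qed.

Lemma gf_mvt a w c1 c2 : 10 <= a -> 0 <= w <= 1 -> -1 <= c1 <= c2 -> c2 <= 1 ->
  exists xi, hyp a xi w /\ gf a c2 w - gf a c1 w = dgf a xi w * (c2 - c1).
Proof.
intros Ha Hw Hc1 Hc2.
destruct (MVT_gen (fun c => gf a c w) c1 c2 (fun c => dgf a c w)) as [xi [Hxi E]].
- intros x Hx. rewrite Rmin_left in Hx by lra. rewrite Rmax_right in Hx by lra.
  apply is_derive_gf. constructor; lra.
- intros x Hx. rewrite Rmin_left in Hx by lra. rewrite Rmax_right in Hx by lra.
  apply cont_of_derive. eexists. apply is_derive_gf. constructor; lra.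
- rewrite Rmin_left in Hxi by lra. rewrite Rmax_right in Hxi by lra.
  exists xi. split; [constructor; lra| exact E].
Qed.

Lemma gf_decr a w c1 c2 : 10 <= a -> 0 <= w <= 1 -> -1 <= c1 < c2 -> c2 <= 1 ->
  gf a c2 w < gf a c1 w.
Proof.
intros Ha Hw Hc1 Hc2.
destruct (gf_mvt a w c1 c2 Ha Hw ltac:(lra) Hc2) as [xi [Hxi E]].
pose proof (dgf_bnd _ _ _ Hxi). destruct (inva_bnd a Ha) as [[E1 E2] E3].
assert (dgf a xi w * (c2 - c1) < 0).
{ apply Rmult_neg_pos; [|lra]. lra. }
lra.
Qed.

Lemma gf_lip a w c1 c2 : 10 <= a -> 0 <= w <= 1 -> -1 <= c1 <= 1 -> -1 <= c2 <= 1 ->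
  Rabs (gf a c2 w - gf a c1 w) <= Rabs (c2 - c1).
Proof.
intros Ha Hw Hc1 Hc2. destruct (inva_bnd a Ha) as [[E1 E2] E3].
destruct (Rle_dec c1 c2) as [Hle|Hle].
- destruct (gf_mvt a w c1 c2 Ha Hw ltac:(lra) ltac:(lra)) as [xi [Hxi E]].
  pose proof (dgf_bnd _ _ _ Hxi). rewrite E, Rabs_mult.
  rewrite <- (Rmult_1_l (Rabs (c2 - c1))) at 2.
  apply Rmult_le_compat_r; [apply Rabs_pos|]. apply Rabs_le; lra.
- destruct (gf_mvt a w c2 c1 Ha Hw ltac:(lra) ltac:(lra)) as [xi [Hxi E]].
  pose proof (dgf_bnd _ _ _ Hxi).
  replace (gf a c2 w - gf a c1 w) with (-(gf a c1 w - gf a c2 w)) by ring.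
  rewrite Rabs_Ropp, E, Rabs_mult, (Rabs_minus_sym c2 c1).
  rewrite <- (Rmult_1_l (Rabs (c1 - c2))) at 2.
  apply Rmult_le_compat_r; [apply Rabs_pos|]. apply Rabs_le; lra.
Qed.

Lemma gf_N a c w : hyp a c w ->
  gf a c w = (2*a*Kf a c w - a*c + Kf a c w * pf a c w) / (pf a c w * (a + pf a c w)).
Proof.
intros H. pose proof (pf_bnd _ _ _ H) as [P1 [P2 P3]]. pose proof (ha _ _ _ H).
unfold gf. field. split; lra.
Qed.

Lemma ex_derive_gf_w a c w : hyp a c w -> ex_derive (fun w => gf a c w) w.
Proof.
intros H. pose proof (pf_bnd _ _ _ H) as [P1 [P2 P3]]. pose proof (ha _ _ _ H).
pose proof (Pf_bnd _ _ _ H).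
assert (HP : 0 < Pf a c w) by nra.
unfold gf, pf, Kf. auto_derive;
 (match goal with |- context [sqrt ?X] => replace X with (Pf a c w) by (unfold Pf, Kf; field; lra) end);
 fold (pf a c w).
repeat split; try lra. all: unfold Pf, Kf; auto_derive; auto.
Qed.

Definition Ht (a c t : R) : R := gf a c (cos t ^ 2).
Definition Fint (a c : R) : R := RInt (Ht a c) 0 PI.

Lemma cos2_bnd t : 0 <= cos t ^ 2 <= 1.
Proof. pose proof (COS_bound t). split; nra. Qed.

Lemma Ht_cont a c t : 10 <= a -> -1 <= c <= 1 -> continuous (Ht a c) t.
Proof.
intros Ha Hc. apply (ex_derive_continuous (Ht a c)). unfold Ht.
apply (ex_derive_comp (fun w => gf a c w) (fun t => cos t ^ 2)).
- apply ex_derive_gf_w. pose proof (cos2_bnd t). constructor; lra.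
- auto_derive. auto.
Qed.

Lemma Ht_exRInt a c x y : 10 <= a -> -1 <= c <= 1 -> ex_RInt (Ht a c) x y.
Proof. intros. apply (ex_RInt_continuous (V:=R_CompleteNormedModule)). intros. apply Ht_cont; auto. Qed.

Lemma Fint_decr a c1 c2 : 10 <= a -> -1 <= c1 < c2 -> c2 <= 1 -> Fint a c2 < Fint a c1.
Proof.
intros. unfold Fint. apply RInt_lt.
- apply PI_RGT_0.
- intros; apply Ht_cont; lra.
- intros; apply Ht_cont; lra.
- intros. unfold Ht. apply gf_decr; auto. apply cos2_bnd.
Qed.

Lemma Rminus_minus (x y : R) : minus x y = x - y.
Proof. reflexivity. Qed.

Lemma Fint_lip a c1 c2 : 10 <= a -> -1 <= c1 <= 1 -> -1 <= c2 <= 1 ->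
  Rabs (Fint a c2 - Fint a c1) <= PI * Rabs (c2 - c1).
Proof.
intros. unfold Fint.
assert (E : RInt (Ht a c2) 0 PI - RInt (Ht a c1) 0 PI = RInt (fun t => Ht a c2 t - Ht a c1 t) 0 PI).
{ rewrite (RInt_minus (V:=R_CompleteNormedModule) (Ht a c2) (Ht a c1)) by (apply Ht_exRInt; lra). reflexivity. }
rewrite E.
replace (PI * Rabs (c2 - c1)) with ((PI - 0) * Rabs (c2 - c1)) by ring.
apply abs_RInt_le_const.
- pose proof PI_RGT_0; lra.
- apply (ex_RInt_minus (V:=R_CompleteNormedModule) (Ht a c2) (Ht a c1)); apply Ht_exRInt; lra.
- intros t _. unfold Ht. apply gf_lip; auto. apply cos2_bnd.
Qed.

Lemma gf_pos0 a w : 10 <= a -> 0 < w <= 1 -> 0 < gf a 0 w.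
Proof.
intros Ha Hw. assert (Hh : hyp a 0 w) by (constructor; lra).
pose proof (pf_bnd _ _ _ Hh) as [P1 [P2 P3]].
rewrite gf_N by auto. apply Rdiv_lt_0_compat; [|nra].
assert (0 < Kf a 0 w) by (unfold Kf; apply Rdiv_lt_0_compat; nra). nra.
Qed.

Lemma gf_neg a w : 10 <= a -> 0 <= w <= 1 -> gf a (2/a^2) w < 0.
Proof.
intros Ha Hw. destruct (inva_bnd a Ha) as [[E1 E2] E3].
assert (Hc : 2/a^2 = 2 * (/a)^2) by (field; lra).
assert ((/a)^2 <= 1/100) by nra.
assert (0 <= 2/a^2 <= 1) by (rewrite Hc; split; nra). assert (Hh : hyp a (2/a^2) w) by (constructor; lra).
pose proof (pf_bnd _ _ _ Hh) as [P1 [P2 P3]]. pose proof (Kf_bnd _ _ _ Hh) as [K1 K2].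
rewrite gf_N by auto. apply Rdiv_neg_pos; [|nra].
set (K := Kf a (2/a^2) w) in *. set (p := pf a (2/a^2) w) in *.
rewrite Hc.
assert (2*a*K <= (/a)/2) by nra.
assert (K*p <= (/a)^2/4 * (a + /a)) by nra.
assert (a * (2*(/a)^2) = 2 * /a) by nra.
nra.
Qed.

Lemma Rint_zero (x y : R) : RInt (fun _ => 0) x y = 0.
Proof. rewrite RInt_const. unfold scal; simpl; unfold mult; simpl. ring. Qed.

Lemma Fint_pos a : 10 <= a -> 0 < Fint a 0.
Proof.
intros Ha. unfold Fint. pose proof PI_RGT_0.
rewrite <- (RInt_Chasles (V:=R_CompleteNormedModule) (Ht a 0) 0 (PI/2) PI) by (apply Ht_exRInt; lra).
assert (forall x y, x < y -> (forall t, x < t < y -> 0 < cos t ^ 2) -> 0 < RInt (Ht a 0) x y).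
{ intros x y Hxy Hc. apply RInt_gt_0; auto.
  - intros t Ht0. unfold Ht. apply gf_pos0; auto. split; auto. apply cos2_bnd.
  - intros; apply Ht_cont; lra. }
assert (0 < RInt (Ht a 0) 0 (PI/2)).
{ apply H0; [lra|]. intros t Ht0. assert (0 < cos t) by (apply cos_gt_0; lra). nra. }
assert (0 < RInt (Ht a 0) (PI/2) PI).
{ apply H0; [lra|]. intros t Ht0. assert (cos t < 0) by (apply cos_lt_0; lra). nra. }
change (0 < RInt (Ht a 0) 0 (PI / 2) + RInt (Ht a 0) (PI / 2) PI). lra.
Qed.

Lemma Fint_neg a : 10 <= a -> Fint a (2/a^2) < 0.
Proof.
intros Ha. unfold Fint. apply Rlt_le_trans with (RInt (fun _ => 0) 0 PI); [|rewrite Rint_zero; lra]. apply RInt_lt.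
- apply PI_RGT_0.
- intros; apply continuous_const.
- intros; apply Ht_cont; auto. destruct (inva_bnd a Ha) as [[E1 E2] E3].
  assert (2/a^2 = 2 * (/a)^2) by (field; lra). nra.
- intros. unfold Ht. apply gf_neg; auto. apply cos2_bnd.
Qed.

Definition clamp (c : R) : R := Rmax 0 (Rmin 1 c).

Lemma clamp_lip x y : Rabs (clamp x - clamp y) <= Rabs (x - y).
Proof.
pose proof (Rle_abs (x - y)). pose proof (Rle_abs (y - x)). rewrite Rabs_minus_sym in H0.
unfold clamp, Rmax, Rmin.
repeat destruct Rle_dec; apply Rabs_le; split; lra.
Qed.

Definition Fc (a c : R) : R := Fint a (clamp c).

Lemma clamp_bnd c : 0 <= clamp c <= 1.
Proof. unfold clamp, Rmax, Rmin. repeat destruct Rle_dec; lra. Qed.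

Lemma clamp_id c : 0 <= c <= 1 -> clamp c = c.
Proof. intros. unfold clamp, Rmax, Rmin. repeat destruct Rle_dec; lra. Qed.

Lemma Fc_cont a : 10 <= a -> continuity (Fc a).
Proof.
intros Ha x. unfold continuity_pt, continue_in, limit1_in, limit_in. intros eps Heps.
pose proof PI_RGT_0.
exists (eps / (PI + 1)). split.
- apply Rdiv_lt_0_compat; lra.
- intros y [_ Hy]. unfold R_dist in *. simpl in *. unfold R_dist in *.
  unfold Fc. pose proof (clamp_bnd x). pose proof (clamp_bnd y).
  eapply Rle_lt_trans. apply Fint_lip; auto; lra.
  eapply Rle_lt_trans. apply Rmult_le_compat_l. lra. apply clamp_lip.
  apply Rle_lt_trans with ((PI + 1) * Rabs (y - x)).
  + pose proof (Rabs_pos (y - x)). nra.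
  + apply Rmult_lt_reg_l with (/(PI+1)). apply Rinv_0_lt_compat; lra.
    rewrite <- Rmult_assoc, Rinv_l, Rmult_1_l by lra. unfold Rdiv in Hy. lra.
Qed.

Lemma Fint_zero_exists a : 10 <= a -> exists c, 0 < c < 2/a^2 /\ Fint a c = 0.
Proof.
intros Ha. destruct (inva_bnd a Ha) as [[E1 E2] E3].
assert (Hc : 2/a^2 = 2 * (/a)^2) by (field; lra).
assert (B : 0 < 2/a^2 <= 1) by (rewrite Hc; split; nra).
pose proof (Fint_pos a Ha). pose proof (Fint_neg a Ha).
destruct (IVT_gen (Fc a) 0 (2/a^2) 0 (Fc_cont a Ha)) as [c [Hc1 Hc2]].
- unfold Fc. rewrite !clamp_id by lra. rewrite Rmin_right, Rmax_left; lra.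
- rewrite Rmin_left, Rmax_right in Hc1 by lra.
  unfold Fc in Hc2. rewrite clamp_id in Hc2 by lra.
  exists c. split; auto.
  destruct (Req_dec c 0) as [->|]; [lra|].
  destruct (Req_dec c (2/a^2)) as [->|]; lra.
Qed.

Lemma ball_R (x e y : R) : ball x e y <-> Rabs (y - x) < e.
Proof. reflexivity. Qed.

Lemma lim_left_ext (f g : R -> R) x0 d : 0 < d -> continuous g x0 ->
  (forall y, x0 - d < y < x0 -> g y = f y) -> filterlim f (at_left x0) (locally (g x0)).
Proof.
intros Hd Hg He.
apply (filterlim_ext_loc g f).
- exists (mkposreal d Hd). intros y Hy Hy1. apply ball_R in Hy. simpl in Hy.
  apply He. apply Rabs_lt_between' in Hy. lra.
- eapply filterlim_filter_le_1; [|exact Hg].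
  intros P HP. destruct HP as [eps HP]. exists eps. intros y Hy _. apply HP; auto.
Qed.

Lemma lim_right_ext (f g : R -> R) x0 d : 0 < d -> continuous g x0 ->
  (forall y, x0 < y < x0 + d -> g y = f y) -> filterlim f (at_right x0) (locally (g x0)).
Proof.
intros Hd Hg He.
apply (filterlim_ext_loc g f).
- exists (mkposreal d Hd). intros y Hy Hy1. apply ball_R in Hy. simpl in Hy.
  apply He. apply Rabs_lt_between' in Hy. lra.
- eapply filterlim_filter_le_1; [|exact Hg].
  intros P HP. destruct HP as [eps HP]. exists eps. intros y Hy _. apply HP; auto.
Qed.

Lemma acos_lim1 : filterlim acos (at_left 1) (locally 0).
Proof.
set (g := fun x => atan (sqrt (1 - x^2) * / x)).
assert (g1 : g 1 = 0).
{ unfold g. replace (1 - 1^2) with 0 by ring. rewrite sqrt_0, Rmult_0_l. apply atan_0. }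
rewrite <- g1. apply lim_left_ext with (d := 1/2); [lra| |].
- unfold g. apply continuous_atan_comp.
  apply (continuous_mult (fun x => sqrt (1 - x^2)) (fun x => / x)).
  + apply continuous_sqrt_comp. apply (ex_derive_continuous (fun x => 1 - x^2)). auto_derive. auto.
  + apply (ex_derive_continuous (fun x => / x)). auto_derive. lra.
- intros y Hy. unfold g. rewrite acos_atan by lra. unfold Rsqr, Rdiv. f_equal. f_equal. f_equal. ring.
Qed.

Lemma acos_limm1 : filterlim acos (at_right (-1)) (locally PI).
Proof.
set (g := fun x => PI - atan (sqrt (1 - x^2) * / (-x))).
assert (g1 : g (-1) = PI).
{ unfold g. replace (1 - (-1)^2) with 0 by ring. rewrite sqrt_0, Rmult_0_l, atan_0. ring. }
rewrite <- g1. apply lim_right_ext with (d := 1/2); [lra| |].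
- unfold g. apply (continuous_minus (fun _ => PI)). apply continuous_const.
  apply continuous_atan_comp.
  apply (continuous_mult (fun x => sqrt (1 - x^2)) (fun x => / (-x))).
  + apply continuous_sqrt_comp. apply (ex_derive_continuous (fun x => 1 - x^2)). auto_derive. auto.
  + apply (ex_derive_continuous (fun x => / (-x))). auto_derive. lra.
- intros y Hy. unfold g. assert (E : acos y = PI - acos (-y)) by (rewrite acos_opp; ring).
  rewrite E. rewrite (acos_atan (-y)) by lra. unfold Rsqr, Rdiv. f_equal. f_equal. f_equal. f_equal. ring.
Qed.

Definition HI (a c y : R) : R := RInt (Ht a c) 0 y.

Lemma HI_derive a c y : 10 <= a -> -1 <= c <= 1 -> is_derive (HI a c) y (Ht a c y).
Proof.
intros. apply (is_derive_RInt (V:=R_NormedModule) (Ht a c) (HI a c) 0 y).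
- exists (mkposreal 1 Rlt_0_1). intros b _. unfold HI.
  apply (RInt_correct (V:=R_CompleteNormedModule)). apply Ht_exRInt; auto.
- apply Ht_cont; auto.
Qed.

Lemma HI_cont a c y : 10 <= a -> -1 <= c <= 1 -> continuous (HI a c) y.
Proof. intros. apply (ex_derive_continuous (HI a c)). eexists. apply HI_derive; auto. Qed.

Lemma acos_derive x : -1 < x < 1 -> is_derive acos x (-1/sqrt(1 - x^2)).
Proof.
intros Hx. apply is_derive_Reals.
apply (derive_pt_eq_1 _ _ _ (derivable_pt_acos x Hx)).
rewrite derive_pt_acos. unfold Rsqr. f_equal. f_equal. f_equal. ring.
Qed.

Definition Psi (a c x : R) : R := - HI a c (acos x).

Definition gL (a c x : R) : R := gf a c (x^2) * / sqrt (1 - x^2).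

Lemma Psi_derive a c x : 10 <= a -> -1 <= c <= 1 -> -1 < x < 1 ->
  is_derive (Psi a c) x (gL a c x).
Proof.
intros Ha Hc Hx.
assert (H1 := is_derive_comp (HI a c) acos x _ _ (HI_derive a c (acos x) Ha Hc) (acos_derive x Hx)).
assert (H2 := is_derive_opp _ _ _ H1).
unfold Psi. replace (gL a c x) with (opp (scal (-1/sqrt(1 - x^2)) (Ht a c (acos x)))).
- exact H2.
- unfold Ht, gL. rewrite cos_acos by lra. unfold opp, scal; simpl. unfold mult; simpl.
  unfold opp; simpl. field.
  intro H. apply sqrt_eq_0 in H; nra.
Qed.

Lemma gL_cont a c x : 10 <= a -> -1 <= c <= 1 -> -1 < x < 1 -> continuous (gL a c) x.
Proof.
intros Ha Hc Hx. apply (ex_derive_continuous (gL a c)). unfold gL.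
apply (ex_derive_mult (fun x => gf a c (x^2)) (fun x => / sqrt (1 - x^2))).
- apply (ex_derive_comp (fun w => gf a c w) (fun x => x^2)).
  + apply ex_derive_gf_w. constructor; nra.
  + auto_derive. auto.
- auto_derive. repeat split; try nra.
  intro H. apply sqrt_eq_0 in H; nra.
Qed.

Lemma prod_in : filter_prod (at_right (-1)) (at_left 1)
  (fun ab : R * R => forall x, Rmin (fst ab) (snd ab) <= x <= Rmax (fst ab) (snd ab) -> -1 < x < 1).
Proof.
apply (Filter_prod _ _ _ (fun x => -1 < x < 1) (fun x => -1 < x < 1)).
- exists (mkposreal 1 Rlt_0_1). intros y Hy Hy1. apply ball_R in Hy. simpl in Hy.
  apply Rabs_lt_between' in Hy. lra.
- exists (mkposreal 1 Rlt_0_1). intros y Hy Hy1. apply ball_R in Hy. simpl in Hy.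
  apply Rabs_lt_between' in Hy. lra.
- intros u v Hu Hv x Hx. simpl in Hx.
  unfold Rmin, Rmax in Hx. destruct Rle_dec; lra.
Qed.

Lemma Lgen a c : 10 <= a -> -1 <= c <= 1 ->
  is_RInt_gen (gL a c) (at_right (-1)) (at_left 1) (Fint a c).
Proof.
intros Ha Hc.
assert (HD : forall x, -1 < x < 1 -> Derive (Psi a c) x = gL a c x).
{ intros. apply is_derive_unique. apply Psi_derive; auto. }
apply (is_RInt_gen_ext (Derive (Psi a c))).
- eapply filter_imp; [|exact prod_in]. intros [u v] H x Hx. simpl in *.
  apply HD. apply H. lra.
- replace (Fint a c) with ((- HI a c 0) - (- HI a c PI)).
  2:{ unfold HI, Fint. rewrite RInt_point. simpl. unfold zero; simpl. ring. }
  apply is_RInt_gen_Derive.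
  + eapply filter_imp; [|exact prod_in]. intros [u v] H x Hx.
    eexists. apply Psi_derive; auto.
  + eapply filter_imp; [|exact prod_in]. intros [u v] H x Hx.
    specialize (H x Hx).
    apply (continuous_ext_loc _ (gL a c)).
    * exists (mkposreal (Rmin (x + 1) (1 - x)) ltac:(apply Rmin_pos; lra)).
      intros y Hy. apply ball_R in Hy. simpl in Hy. apply Rabs_lt_between' in Hy.
      pose proof (Rmin_l (x+1) (1-x)). pose proof (Rmin_r (x+1) (1-x)).
      symmetry. apply HD. lra.
    * apply gL_cont; auto.
  + unfold Psi. apply (filterlim_comp _ _ _ acos (fun y => - HI a c y) _ (locally PI)). apply acos_limm1.
    apply (continuous_opp (HI a c)). apply HI_cont; auto.
  + unfold Psi. apply (filterlim_comp _ _ _ acos (fun y => - HI a c y) _ (locally 0)). apply acos_lim1.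
    apply (continuous_opp (HI a c)). apply HI_cont; auto.
Qed.

Lemma Lint_eq a th x : 10 <= a -> -1 < x < 1 -> L_integrand a th x = gL a (cos (2*th)) x.
Proof.
intros Ha Hx. set (c := cos (2*th)).
assert (Hsc := sin2_cos2 (2*th)). unfold Rsqr in Hsc. fold c in Hsc.
pose proof (COS_bound (2*th)) as Hcb. fold c in Hcb.
assert (HC2 : Cc a th ^ 2 = (1 - c^2)/(4*a^2)).
{ unfold Cc. replace ((sin (2*th) / (2*a))^2) with (sin(2*th)^2/(4*a^2)) by (field; lra).
  f_equal. nra. }
assert (HP : Pp a th x = Pf a c (x^2)).
{ unfold Pp, Pf, Kf. rewrite HC2. fold c. field. lra. }
assert (Hh : hyp a c (x^2)) by (constructor; nra).
pose proof (pf_bnd _ _ _ Hh) as [P1 [P2 P3]].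
assert (Hs : 0 < sqrt (1 - x^2)) by (apply sqrt_lt_R0; nra).
unfold L_integrand. rewrite HP, HC2. rewrite sqrt_mult_alt by nra.
unfold gL. rewrite gf_N by auto. fold (pf a c (x^2)). unfold Kf. fold c.
field. repeat split; lra.
Qed.

Lemma L_vanishes_iff a th : 10 <= a -> L_vanishes a th <-> Fint a (cos (2*th)) = 0.
Proof.
intros Ha. pose proof (COS_bound (2*th)).
assert (HG : is_RInt_gen (L_integrand a th) (at_right (-1)) (at_left 1) (Fint a (cos (2*th)))).
{ apply (is_RInt_gen_ext (gL a (cos (2*th)))).
  - eapply filter_imp; [|exact prod_in]. intros [u v] H1 x Hx. simpl in *.
    symmetry. apply Lint_eq; auto. apply H1. lra.
  - apply Lgen; auto. }
unfold L_vanishes. split.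
- intros H0. pose proof (is_RInt_gen_unique (V:=R_CompleteNormedModule) _ _ H0) as U1.
  pose proof (is_RInt_gen_unique (V:=R_CompleteNormedModule) _ _ HG) as U2.
  rewrite <- U2, <- U1. reflexivity.
- intros E. rewrite <- E. exact HG.
Qed.

Lemma Fint_inj a c1 c2 : 10 <= a -> -1 <= c1 <= 1 -> -1 <= c2 <= 1 ->
  Fint a c1 = Fint a c2 -> c1 = c2.
Proof.
intros Ha H1 H2 E. destruct (Rtotal_order c1 c2) as [Hl|[Hl|Hl]]; auto.
- pose proof (Fint_decr a c1 c2 Ha ltac:(lra) ltac:(lra)). lra.
- pose proof (Fint_decr a c2 c1 Ha ltac:(lra) ltac:(lra)). lra.
Qed.

Lemma adm_c a th : 10 <= a -> theta_admissible a th ->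
  0 < cos (2*th) < 1 /\ 0 < sin (2*th) /\ Fint a (cos (2*th)) = 0.
Proof.
intros Ha [_ [Ht HL]]. apply L_vanishes_iff in HL; auto.
pose proof PI_RGT_0.
split; [split|split]; auto.
- apply cos_gt_0; lra.
- rewrite <- cos_0. apply cos_decreasing_1; lra.
- apply sin_gt_0; lra.
Qed.

Lemma theta_tilde_spec a : 10 <= a ->
  theta_admissible a (theta_tilde a) /\ 0 < cos (2 * theta_tilde a) < 2/a^2.
Proof.
intros Ha.
destruct (Fint_zero_exists a Ha) as [cs [Hcs HF]].
destruct (inva_bnd a Ha) as [[E1 E2] E3].
assert (Hc : 2/a^2 = 2 * (/a)^2) by (field; lra).
assert (2/a^2 <= 1/50) by (rewrite Hc; nra). assert (0 < 2/a^2) by (rewrite Hc; nra).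
pose proof PI_RGT_0.
set (ths := acos cs / 2).
assert (Hac : 0 < acos cs < PI/2).
{ rewrite acos_atan by lra. split.
  - rewrite <- atan_0. apply atan_increasing.
    apply Rdiv_lt_0_compat; [|lra]. apply sqrt_lt_R0. unfold Rsqr. nra.
  - pose proof (atan_bound (sqrt (1 - cs²) / cs)). lra. }
assert (Hadm : theta_admissible a ths).
{ unfold theta_admissible, theta_plus. destruct Rlt_dec; [|lra].
  unfold ths. split; [lra|split; [lra|]].
  apply L_vanishes_iff; auto. replace (2 * (acos cs / 2)) with (acos cs) by field.
  rewrite cos_acos by lra. auto. }
assert (Hex : exists th, theta_admissible a th /\ forall th', theta_admissible a th' -> th' = th).
{ exists ths. split; auto. intros th' Hadm'.
  destruct (adm_c a th' Ha Hadm') as [[C1 C2] [_ F']].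
  assert (Ec : cos (2*th') = cs) by (apply (Fint_inj a); try lra; congruence).
  destruct Hadm' as [_ [Ht' _]].
  unfold ths. rewrite <- Ec. rewrite acos_cos by lra. field. }
destruct (epsilon_spec (inhabits 0) _ Hex) as [Hadm' _].
fold (theta_tilde a) in Hadm'.
split; auto.
destruct (adm_c a _ Ha Hadm') as [[C1 C2] [_ F']].
split; auto.
destruct (Rtotal_order (cos (2 * theta_tilde a)) (2/a^2)) as [Hl|[Hl|Hl]]; auto.
- pose proof (Fint_neg a Ha) as FN. rewrite <- Hl in FN. lra.
- pose proof (Fint_neg a Ha). pose proof (Fint_decr a (2/a^2) (cos (2 * theta_tilde a)) Ha ltac:(lra) ltac:(lra)). lra.
Qed.

Lemma loc_sign f x l : is_derive f x l -> l <> 0 ->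
  exists d, 0 < d /\ forall h, h <> 0 -> Rabs h < d -> 0 < (f (x+h) - f x) / h * l.
Proof.
intros H Hl. apply is_derive_Reals in H.
destruct (H (Rabs l)) as [dl Hd]. { apply Rabs_pos_lt; auto. }
exists dl. split; [apply cond_pos|]. intros h Hh Hhd.
specialize (Hd h Hh Hhd). set (q := (f (x+h) - f x)/h) in *.
apply Rabs_lt_between' in Hd.
destruct (Rle_dec 0 l).
- rewrite Rabs_right in Hd by lra. nra.
- rewrite Rabs_left in Hd by lra. nra.
Qed.

Lemma darboux_core f u : (forall x, ex_derive f x) -> Derive f 0 < 0 -> 0 < u -> 0 < Derive f u ->
  exists m, 0 < m < u /\ Derive f m = 0.
Proof.
intros Hd H0 Hu Hpos.
destruct (continuity_ab_min f 0 u ltac:(lra)) as [m [Hm Hmb]].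
{ intros c _. apply cont_of_derive. auto. }
assert (Hm0 : m <> 0).
{ intros ->. destruct (loc_sign f 0 (Derive f 0) (Derive_correct _ _ (Hd 0)) ltac:(lra)) as [d [Hd0 Hs]].
  set (h := Rmin (d/2) (u/2)).
  assert (0 < h) by (apply Rmin_pos; lra).
  assert (h <= d/2) by apply Rmin_l. assert (h <= u/2) by apply Rmin_r.
  specialize (Hs h ltac:(lra) ltac:(rewrite Rabs_right; lra)).
  specialize (Hm h ltac:(lra)). rewrite Rplus_0_l in Hs.
  assert ((f h - f 0) / h < 0) by nra.
  assert (f h - f 0 < 0).
  { apply Rmult_lt_reg_r with (/h). apply Rinv_0_lt_compat; lra. rewrite Rmult_0_l. exact H3. }
  lra. }
assert (Hmu : m <> u).
{ intros ->. destruct (loc_sign f u (Derive f u) (Derive_correct _ _ (Hd u)) ltac:(lra)) as [d [Hd0 Hs]].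
  set (h := Rmin (d/2) (u/2)).
  assert (0 < h) by (apply Rmin_pos; lra).
  assert (h <= d/2) by apply Rmin_l. assert (h <= u/2) by apply Rmin_r.
  specialize (Hs (-h) ltac:(lra) ltac:(rewrite Rabs_left; lra)).
  specialize (Hm (u - h) ltac:(lra)).
  replace (u + - h) with (u - h) in Hs by ring.
  assert (0 < (f (u - h) - f u) / (-h)) by nra.
  assert (0 < (f u - f (u - h)) / h) by (replace ((f u - f (u - h)) / h) with ((f (u - h) - f u) / (-h)) by (field; lra); lra).
  assert (0 < f u - f (u - h)).
  { apply Rmult_lt_reg_r with (/h). apply Rinv_0_lt_compat; lra. rewrite Rmult_0_l. exact H4. }
  lra. }
exists m. split; [lra|].
rewrite <- (Derive_Reals f m (ex_derive_Reals_0 f m (Hd m))).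
apply (deriv_minimum f 0 u m); try lra.
intros x Hx1 Hx2. apply Hm. lra.
Qed.

Lemma sign_const f : (forall x, ex_derive f x) -> (forall x, Derive f x <> 0) -> Derive f 0 < 0 ->
  forall u, Derive f u < 0.
Proof.
intros Hd Hnz H0 u.
destruct (Rlt_dec (Derive f u) 0) as [|Hn]; auto. exfalso.
assert (Hp : 0 < Derive f u) by (specialize (Hnz u); lra).
destruct (Rtotal_order u 0) as [Hu|[Hu|Hu]].
- set (g := fun x => - f (- x)).
  assert (Hg : forall x, is_derive g x (Derive f (-x))).
  { intros x. unfold g.
    pose proof (is_derive_comp f (fun x => -x) x _ _ (Derive_correct _ _ (Hd (-x))) (is_derive_opp _ _ _ (is_derive_id x))) as Hc.
    pose proof (is_derive_opp _ _ _ Hc) as Hc2. simpl in Hc2.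
    assert (E : Derive f (-x) = - ((-1) * (Derive f (-x)))) by ring.
    rewrite E. exact Hc2. }
  assert (Hgd : forall x, ex_derive g x) by (intros x; eexists; apply Hg).
  assert (HgD : forall x, Derive g x = Derive f (-x)) by (intros x; apply is_derive_unique; apply Hg).
  destruct (darboux_core g (-u) Hgd) as [m [Hm Hm0]].
  + rewrite HgD. replace (-0) with 0 by ring. auto.
  + lra.
  + rewrite HgD, Ropp_involutive. auto.
  + rewrite HgD in Hm0. apply (Hnz (-m)). auto.
- subst. lra.
- destruct (darboux_core f u Hd H0 Hu Hp) as [m [_ Hm]]. apply (Hnz m). auto.
Qed.

Lemma Pp_eq a th x : 0 < a -> Pp a th x = Pf a (cos (2*th)) (x^2).
Proof.
intros Ha. set (c := cos (2*th)).
assert (Hsc := sin2_cos2 (2*th)). unfold Rsqr in Hsc. fold c in Hsc.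
unfold Pp, Pf, Kf, Cc. fold c. replace (sin (2*th) ^ 2) with (1 - c^2) by nra.
replace ((sin (2*th) / (2*a))^2) with (sin(2*th)^2/(4*a^2)) by (field; lra).
replace (sin (2*th) ^ 2) with (1 - c^2) by nra. field. lra.
Qed.

Definition ct (a : R) : R := cos (2 * theta_tilde a).
Definition st (a : R) : R := sin (2 * theta_tilde a).

Lemma ct_st a : 10 <= a ->
  0 < ct a < 2/a^2 /\ 0 < st a /\ st a ^2 = 1 - ct a ^2 /\ CC a = st a / (2*a).
Proof.
intros Ha. destruct (theta_tilde_spec a Ha) as [Hadm Hc].
destruct (adm_c a _ Ha Hadm) as [_ [Hs _]].
assert (Hsc := sin2_cos2 (2*theta_tilde a)). unfold Rsqr in Hsc.
unfold ct, st, CC, Cc. repeat split; try lra; nra.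
Qed.

Lemma phi_deriv a f : 10 <= a -> is_phi a f ->
  forall u, Derive f u = - pf a (ct a) (cos (f u) ^ 2).
Proof.
intros Ha [Hd [H0 H0']].
destruct (ct_st a Ha) as [[C1 C2] _].
destruct (inva_bnd a Ha) as [[E1 E2] E3].
assert (C3 : 2/a^2 = 2 * (/a)^2) by (field; lra).
assert (Hh : forall u, hyp a (ct a) (cos (f u) ^ 2)).
{ intros u. pose proof (cos2_bnd (f u)). constructor; try lra. rewrite C3 in C2. nra. }
assert (Hsq : forall u, Derive f u ^ 2 = pf a (ct a) (cos (f u) ^ 2) ^ 2).
{ intros u. destruct (Hd u) as [_ Hu]. rewrite Hu. rewrite Pp_eq by lra.
  destruct (pf_bnd _ _ _ (Hh u)) as [_ [_ P3]]. rewrite P3. reflexivity. }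
assert (Hnz : forall u, Derive f u <> 0).
{ intros u Hu. specialize (Hsq u). rewrite Hu in Hsq.
  destruct (pf_bnd _ _ _ (Hh u)) as [P1 _]. nra. }
assert (Hneg : forall u, Derive f u < 0).
{ apply sign_const; auto. intros; apply Hd. specialize (Hnz 0). lra. }
intros u. specialize (Hsq u). specialize (Hneg u).
destruct (pf_bnd _ _ _ (Hh u)) as [P1 _].
set (p := pf a (ct a) (cos (f u) ^ 2)) in *.
assert ((Derive f u + p) * (Derive f u - p) = 0) by nra.
apply Rmult_integral in H. destruct H; nra.
Qed.

Lemma RInt_abs_bound (g : R -> R) x M :
  (forall t, continuous g t) -> (forall t, Rabs (g t) <= M) -> Rabs (RInt g 0 x) <= Rabs x * M.
Proof.
intros Hc Hb.
assert (Hex : forall y z, ex_RInt g y z) by (intros; apply (ex_RInt_continuous (V:=R_CompleteNormedModule)); auto).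
destruct (Rle_dec 0 x).
- rewrite (Rabs_right x) by lra. replace (x * M) with ((x - 0) * M) by ring.
  apply abs_RInt_le_const; auto.
- rewrite <- (opp_RInt_swap (V:=R_CompleteNormedModule)) by auto.
  change (opp (RInt g x 0)) with (- RInt g x 0). rewrite Rabs_Ropp.
  rewrite (Rabs_left x) by lra. replace (-x * M) with ((0 - x) * M) by ring.
  apply abs_RInt_le_const; auto. lra.
Qed.

Lemma pf_cont a c w : continuous (fun w => pf a c w) w.
Proof.
unfold pf. apply continuous_sqrt_comp.
apply (ex_derive_continuous (fun w => Pf a c w)). unfold Pf, Kf. auto_derive. auto.
Qed.

Lemma phi_cont a f u : is_phi a f -> continuous f u.
Proof. intros [Hd _]. apply (ex_derive_continuous f). apply Hd. Qed.

Lemma Dphi_cont a f u : 10 <= a -> is_phi a f -> continuous (Derive f) u.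
Proof.
intros Ha Hp.
apply (continuous_ext (fun u => - pf a (ct a) (cos (f u) ^ 2))).
{ intros; symmetry; apply phi_deriv; auto. }
apply (continuous_opp (fun u => pf a (ct a) (cos (f u) ^ 2))).
apply (continuous_comp (fun u => cos (f u) ^ 2) (fun w => pf a (ct a) w)).
- apply (continuous_comp f (fun x => cos x ^ 2)).
  + apply (phi_cont a); auto.
  + apply (ex_derive_continuous (fun x => cos x ^ 2)). auto_derive. auto.
- apply pf_cont.
Qed.

Lemma hyp_u a (f : R -> R) u : 10 <= a -> hyp a (ct a) (cos (f u) ^ 2).
Proof.
intros Ha. destruct (ct_st a Ha) as [[C1 C2] _].
destruct (inva_bnd a Ha) as [[E1 E2] E3].
assert (C3 : 2/a^2 = 2 * (/a)^2) by (field; lra).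
pose proof (cos2_bnd (f u)). constructor; try lra. rewrite C3 in C2. nra.
Qed.

Lemma phi_est a f uh : 10 <= a -> is_phi a f -> Rabs (f (uh/a) + uh) <= Rabs uh * (/a)^2.
Proof.
intros Ha Hp. pose proof Hp as [Hd [H0 _]].
destruct (inva_bnd a Ha) as [[E1 E2] E3].
destruct (MVT_gen f 0 (uh/a) (Derive f)) as [xi [_ E]].
- intros x _. apply Derive_correct. apply Hd.
- intros x _. apply cont_of_derive. apply Hd.
- rewrite H0, (phi_deriv a f Ha Hp) in E.
  destruct (pf_bnd _ _ _ (hyp_u a f xi Ha)) as [_ [P2 _]].
  set (p := pf a (ct a) (cos (f xi) ^ 2)) in *.
  replace (f (uh/a) + uh) with (uh * (1 - p * /a)).
  2:{ replace (f (uh/a)) with (- p * (uh / a - 0)) by lra. field. lra. }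
  rewrite Rabs_mult. apply Rmult_le_compat_l; [apply Rabs_pos|].
  apply Rabs_le. split; nra.
Qed.

Lemma CC_bnd a : 10 <= a -> 0 < CC a <= /(2*a) /\ Rabs (a * CC a - 1/2) <= 2 * (/a)^4.
Proof.
intros Ha. destruct (ct_st a Ha) as [[C1 C2] [S1 [S2 S3]]].
destruct (inva_bnd a Ha) as [[E1 E2] E3].
assert (C3 : 2/a^2 = 2 * (/a)^2) by (field; lra). rewrite C3 in C2.
assert (S4 : st a <= 1) by nra.
rewrite S3. split; [split|].
- apply Rdiv_lt_0_compat; lra.
- unfold Rdiv. rewrite <- (Rmult_1_l (/(2*a))) at 2. apply Rmult_le_compat_r; [|lra].
  apply Rlt_le, Rinv_0_lt_compat; lra.
- replace (a * (st a / (2*a)) - 1/2) with ((st a - 1)/2) by (field; lra).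
  assert (1 - st a <= ct a ^2) by nra.
  assert (ct a ^ 2 <= 4 * (/a)^4) by nra.
  apply Rabs_le. split; nra.
Qed.

Lemma Gp_est a f u : 10 <= a -> is_phi a f -> Rabs (Gp a f u) <= 3 * (/a)^3.
Proof.
intros Ha Hp. destruct (ct_st a Ha) as [[C1 C2] _].
destruct (inva_bnd a Ha) as [[E1 E2] E3].
assert (C3 : 2/a^2 = 2 * (/a)^2) by (field; lra). rewrite C3 in C2.
destruct (CC_bnd a Ha) as [[K1 K2] _].
assert (K3 : CC a <= /a / 2) by (rewrite Rinv_mult in K2; lra).
unfold Gp. rewrite (phi_deriv a f Ha Hp).
destruct (pf_bnd _ _ _ (hyp_u a f u Ha)) as [P1 [P2 _]].
set (p := pf a (ct a) (cos (f u) ^ 2)) in *. fold (ct a).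
pose proof (cos2_bnd (f u)).
replace (a - - p) with (a + p) by ring.
assert (0 <= CC a ^ 2 * cos (f u) ^ 2 <= (/a)^2/4) by (split; nra).
unfold Rdiv. rewrite Rabs_mult. rewrite (Rabs_right (/(a+p))) by (apply Rle_ge, Rlt_le, Rinv_0_lt_compat; lra).
assert (Rabs (CC a ^ 2 * cos (f u) ^ 2 - ct a) <= 3 * (/a)^2) by (apply Rabs_le; split; nra).
assert (/(a+p) <= /a) by (apply Rinv_le_contravar; lra).
assert (0 <= /(a+p)) by (apply Rlt_le, Rinv_0_lt_compat; lra).
replace (3 * (/a)^3) with ((3 * (/a)^2) * /a) by ring.
apply Rmult_le_compat; auto; apply Rabs_pos.
Qed.

Lemma Gp_cont a f u : 10 <= a -> is_phi a f -> continuous (Gp a f) u.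
Proof.
intros Ha Hp. unfold Gp.
destruct (pf_bnd _ _ _ (hyp_u a f u Ha)) as [P1 _].
apply (continuous_mult (fun u => CC a ^ 2 * cos (f u) ^ 2 - cos (2 * theta_tilde a))
                       (fun u => / (a - Derive f u))).
- apply (continuous_comp f (fun x => CC a ^ 2 * cos x ^ 2 - cos (2 * theta_tilde a))).
  + apply (phi_cont a); auto.
  + apply (ex_derive_continuous (fun x => CC a ^ 2 * cos x ^ 2 - cos (2 * theta_tilde a))). auto_derive. auto.
- apply (continuous_comp (fun u => a - Derive f u) (fun x => / x)).
  + apply (continuous_minus (fun _ => a) (Derive f)). apply continuous_const. apply (Dphi_cont a); auto.
  + apply (ex_derive_continuous (fun x => / x)). auto_derive. rewrite (phi_deriv a f Ha Hp). lra.
Qed.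

Lemma Gf_est a f uh : 10 <= a -> is_phi a f -> Rabs (Gf a f (uh/a)) <= Rabs uh * (3 * (/a)^4).
Proof.
intros Ha Hp. destruct (inva_bnd a Ha) as [[E1 E2] E3]. unfold Gf.
eapply Rle_trans. apply RInt_abs_bound.
- intros; apply Gp_cont; auto.
- intros; apply Gp_est; auto.
- unfold Rdiv. rewrite Rabs_mult, (Rabs_right (/a)) by lra.
  replace (Rabs uh * / a * (3 * (/ a) ^ 3)) with (Rabs uh * (3 * (/ a) ^ 4)) by ring. lra.
Qed.

Lemma beta_est a f uh : 10 <= a -> is_phi a f -> Rabs (betaf a f (uh/a)) <= Rabs uh * (/a)^2.
Proof.
intros Ha Hp. destruct (inva_bnd a Ha) as [[E1 E2] E3]. unfold betaf.
destruct (CC_bnd a Ha) as [[K1 K2] _].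
assert (K3 : CC a <= /a / 2) by (rewrite Rinv_mult in K2; lra).
eapply Rle_trans. apply (RInt_abs_bound _ _ (/a)).
- intros. apply (continuous_comp f (fun x => CC a * cos x ^ 2)).
  + apply (phi_cont a); auto.
  + apply (ex_derive_continuous (fun x => CC a * cos x ^ 2)). auto_derive. auto.
- intros t. pose proof (cos2_bnd (f t)). rewrite Rabs_right by nra. nra.
- unfold Rdiv. rewrite Rabs_mult, (Rabs_right (/a)) by lra. nra.
Qed.

Lemma Lplus f g (l1 l2 : R) : is_lim f p_infty l1 -> is_lim g p_infty l2 ->
  is_lim (fun x => f x + g x) p_infty (l1 + l2).
Proof. apply is_lim_plus'. Qed.

Lemma Lmult f g (l1 l2 : R) : is_lim f p_infty l1 -> is_lim g p_infty l2 ->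
  is_lim (fun x => f x * g x) p_infty (l1 * l2).
Proof.
intros H1 H2. pose proof (is_lim_mult f g p_infty l1 l2 H1 H2 I) as H. exact H.
Qed.

Lemma Lopp f (l : R) : is_lim f p_infty l -> is_lim (fun x => - f x) p_infty (- l).
Proof. intros H. pose proof (is_lim_opp f p_infty l H) as H'. exact H'. Qed.

Lemma Lminus f g (l1 l2 : R) : is_lim f p_infty l1 -> is_lim g p_infty l2 ->
  is_lim (fun x => f x - g x) p_infty (l1 - l2).
Proof. intros. apply Lplus; auto. apply Lopp; auto. Qed.

Lemma Ldivc f c (l : R) : is_lim f p_infty l -> is_lim (fun x => f x / c) p_infty (l / c).
Proof. intros. apply Lmult; auto. apply is_lim_const. Qed.

Lemma Lcos f (l : R) : is_lim f p_infty l -> is_lim (fun x => cos (f x)) p_infty (cos l).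
Proof. intros. apply is_lim_comp_continuous; auto. apply continuous_cos. Qed.

Lemma Lsin f (l : R) : is_lim f p_infty l -> is_lim (fun x => sin (f x)) p_infty (sin l).
Proof. intros. apply is_lim_comp_continuous; auto. apply continuous_sin. Qed.

Lemma Lexp f (l : R) : is_lim f p_infty l -> is_lim (fun x => exp (f x)) p_infty (exp l).
Proof. intros. apply is_lim_comp_continuous; auto. apply continuous_exp. Qed.

Lemma Lval f (l lp : R) : is_lim f p_infty lp -> lp = l -> is_lim f p_infty l.
Proof. intros H ->. exact H. Qed.

Ltac lim_tac :=
  first
  [ eassumption
  | apply is_lim_const
  | match goal with
    | |- is_lim (fun x => @?f x + @?g x) _ _ => eapply (Lplus f g); lim_tac
    | |- is_lim (fun x => @?f x - @?g x) _ _ => eapply (Lminus f g); lim_tac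
    | |- is_lim (fun x => @?f x * @?g x) _ _ => eapply (Lmult f g); lim_tac
    | |- is_lim (fun x => @?f x / ?c) _ _ => eapply (Ldivc f c); lim_tac
    | |- is_lim (fun x => - @?f x) _ _ => eapply (Lopp f); lim_tac
    | |- is_lim (fun x => cos (@?f x)) _ _ => eapply (Lcos f); lim_tac
    | |- is_lim (fun x => sin (@?f x)) _ _ => eapply (Lsin f); lim_tac
    | |- is_lim (fun x => exp (@?f x)) _ _ => eapply (Lexp f); lim_tac
    end ].

Lemma Linv : is_lim (fun x => / x) p_infty 0.
Proof.
pose proof (is_lim_inv (fun x => x) p_infty p_infty (is_lim_id p_infty) ltac:(discriminate)) as H.
exact H.
Qed.

Lemma lim_bound (f : R -> R) l K :
  (forall a, 10 <= a -> Rabs (f a - l) <= K * /a) -> is_lim f p_infty l.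
Proof.
intros H.
apply (is_lim_le_le_loc (fun a => l - K * /a) (fun a => l + K * /a)).
- exists 10. intros a Ha. specialize (H a ltac:(lra)). apply Rabs_le_between in H. lra.
- apply (Lval _ _ (l - K * 0)); [|ring]. pose proof Linv. lim_tac.
- apply (Lval _ _ (l + K * 0)); [|ring]. pose proof Linv. lim_tac.
Qed.

Lemma Linvf f (l : R) : is_lim f p_infty l -> l <> 0 -> is_lim (fun x => / f x) p_infty (/ l).
Proof. intros H Hl. pose proof (is_lim_inv f p_infty l H ltac:(intro E; apply Hl; injection E; auto)) as H'. exact H'. Qed.

Section Main.
Variables (uh vh : R) (phi : R -> R -> R).
Hypothesis Hphi : forall a : R, 0 < a -> is_phi a (phi a).

Definition phU a := phi a (uh/a).
Definition gU a := a * Gp a (phi a) (uh/a).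
Definition kU a := a * CC a.
Definition bU a := betaf a (phi a) (uh/a).
Definition GU a := Gf a (phi a) (uh/a).
Definition EU a := exp (vh/2 + bU a).
Definition rU a := (/a)^4 * / EU a.
Definition i2 a := (/a)^2.
Definition lq a := ln a / a * / a.

Lemma inv_le1 a : 10 <= a -> (/a)^2 <= /a /\ (/a)^3 <= /a /\ (/a)^4 <= /a.
Proof. intros Ha. destruct (inva_bnd a Ha) as [[E1 E2] E3]. set (e := /a) in *. assert (e^2 <= e) by nra. assert (0 <= e^2) by nra. assert (e^3 <= e^2) by (simpl in *; nra). assert (e^4 <= e^3) by (simpl in *; nra). lra. Qed.

Lemma lim_phU : is_lim phU p_infty (- uh).
Proof.
apply (lim_bound _ _ (Rabs uh)). intros a Ha. pose proof (inv_le1 a Ha).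
replace (phU a - - uh) with (phU a + uh) by ring.
eapply Rle_trans. apply phi_est; auto. apply Hphi; lra.
apply Rmult_le_compat_l; [apply Rabs_pos|lra].
Qed.

Lemma lim_gU : is_lim gU p_infty 0.
Proof.
apply (lim_bound _ _ 3). intros a Ha. pose proof (inv_le1 a Ha).
destruct (inva_bnd a Ha) as [[E1 E2] E3].
unfold gU. rewrite Rminus_0_r, Rabs_mult, (Rabs_right a) by lra.
pose proof (Gp_est a (phi a) (uh/a) Ha (Hphi a ltac:(lra))).
assert (a * Rabs (Gp a (phi a) (uh / a)) <= a * (3 * (/a)^3)) by (apply Rmult_le_compat_l; lra).
replace (a * (3 * (/a)^3)) with (3 * (/a)^2) in H1 by (field; lra). lra.
Qed.

Lemma lim_kU : is_lim kU p_infty (1/2).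
Proof.
apply (lim_bound _ _ 2). intros a Ha. pose proof (inv_le1 a Ha).
destruct (CC_bnd a Ha) as [_ H2]. unfold kU. lra.
Qed.

Lemma lim_bU : is_lim bU p_infty 0.
Proof.
apply (lim_bound _ _ (Rabs uh)). intros a Ha. pose proof (inv_le1 a Ha).
unfold bU. rewrite Rminus_0_r. eapply Rle_trans. apply beta_est; auto. apply Hphi; lra.
apply Rmult_le_compat_l; [apply Rabs_pos|lra].
Qed.

Lemma lim_GU : is_lim GU p_infty 0.
Proof.
apply (lim_bound _ _ (3 * Rabs uh)). intros a Ha. pose proof (inv_le1 a Ha).
unfold GU. rewrite Rminus_0_r. eapply Rle_trans. apply Gf_est; auto. apply Hphi; lra.
pose proof (Rabs_pos uh). nra.
Qed.

Lemma lim_EU : is_lim EU p_infty (exp (vh/2)).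
Proof.
pose proof lim_bU. unfold EU. apply (Lval _ _ (exp (vh/2 + 0))); [|f_equal; ring]. lim_tac.
Qed.

Lemma lim_i2 : is_lim i2 p_infty 0.
Proof.
apply (lim_bound _ _ 1). intros a Ha. pose proof (inv_le1 a Ha).
destruct (inva_bnd a Ha) as [[E1 E2] E3].
unfold i2. rewrite Rminus_0_r, Rabs_right by nra. lra.
Qed.

Lemma lim_rU : is_lim rU p_infty 0.
Proof.
assert (H4 : is_lim (fun a => (/a)^4) p_infty 0).
{ apply (lim_bound _ _ 1). intros a Ha. pose proof (inv_le1 a Ha).
  destruct (inva_bnd a Ha) as [[E1 E2] E3].
  rewrite Rminus_0_r, Rabs_right by nra. lra. }
pose proof (Linvf EU _ lim_EU ltac:(apply Rgt_not_eq, exp_pos)).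
unfold rU. apply (Lval _ _ (0 * / exp (vh/2))); [|ring]. lim_tac.
Qed.

Lemma lim_lq : is_lim lq p_infty 0.
Proof.
pose proof is_lim_div_ln_p. pose proof Linv.
unfold lq. apply (Lval _ _ (0 * 0)); [|ring]. lim_tac.
Qed.

Lemma expA a : 10 <= a ->
  exp (Af a (phi a) (uh/a) ((4 * ln a + vh) / (2 * a))) = a^2 * EU a /\
  exp (- Af a (phi a) (uh/a) ((4 * ln a + vh) / (2 * a))) = a^2 * rU a.
Proof.
intros Ha. unfold Af, EU, rU. fold (bU a).
assert (E : a * ((4 * ln a + vh) / (2 * a)) + bU a = ln a + ln a + (vh/2 + bU a)) by (field; lra).
rewrite E. rewrite !exp_plus, exp_ln by lra. split; [ring|].
rewrite exp_Ropp, !exp_plus, exp_ln by lra.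
unfold EU. rewrite ?exp_plus. pose proof (exp_pos (vh/2)). pose proof (exp_pos (bU a)). field. repeat split; lra.
Qed.

Definition vv a := (4 * ln a + vh) / (2 * a).

Lemma y1_eq a : 10 <= a -> y1 a (phi a) (uh/a) (vv a) =
  gU a * cos (phU a) * (EU a - rU a) / 2 - kU a * sin (phU a) * (EU a + rU a) / 2.
Proof.
intros Ha. destruct (expA a Ha) as [X1 X2]. unfold vv.
unfold y1, x1, sinh, cosh. rewrite X1, X2. unfold gU, kU, phU. field. lra.
Qed.

Lemma y2_eq a : 10 <= a -> y2 a (phi a) (uh/a) (vv a) = kU a * (2 * lq a + vh / 2 * i2 a) - GU a.
Proof.
intros Ha. unfold y2, x2, vv, kU, lq, i2, GU. field. lra.
Qed.

Lemma y3_eq a : 10 <= a -> y3 a (phi a) (uh/a) (vv a) =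
  kU a * (EU a + rU a) / 2 * (gU a * i2 a - 1) * cos (phU a)
  - (kU a * kU a * i2 a + gU a) * (EU a - rU a) / 2 * sin (phU a).
Proof.
intros Ha. destruct (expA a Ha) as [X1 X2]. unfold vv.
unfold y3, x3, sinh, cosh. rewrite X1, X2. unfold gU, kU, phU, i2. field. lra.
Qed.

Lemma main_lims :
  is_lim (fun a => y1 a (phi a) (uh / a) ((4 * ln a + vh) / (2 * a))) p_infty
    (sin uh / 4 * exp (vh / 2)) /\
  is_lim (fun a => y2 a (phi a) (uh / a) ((4 * ln a + vh) / (2 * a))) p_infty 0 /\
  is_lim (fun a => y3 a (phi a) (uh / a) ((4 * ln a + vh) / (2 * a))) p_infty
    (- cos uh / 4 * exp (vh / 2)).
Proof.
pose proof lim_phU. pose proof lim_gU. pose proof lim_kU. pose proof lim_GU.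
pose proof lim_EU. pose proof lim_rU. pose proof lim_i2. pose proof lim_lq.
split; [|split].
- apply (is_lim_ext_loc (fun a => gU a * cos (phU a) * (EU a - rU a) / 2 - kU a * sin (phU a) * (EU a + rU a) / 2)).
  { exists 10. intros a Ha. symmetry. apply y1_eq. lra. }
  eapply Lval. lim_tac. rewrite sin_neg. field.
- apply (is_lim_ext_loc (fun a => kU a * (2 * lq a + vh / 2 * i2 a) - GU a)).
  { exists 10. intros a Ha. symmetry. apply y2_eq. lra. }
  eapply Lval. lim_tac. ring.
- apply (is_lim_ext_loc (fun a => kU a * (EU a + rU a) / 2 * (gU a * i2 a - 1) * cos (phU a)
  - (kU a * kU a * i2 a + gU a) * (EU a - rU a) / 2 * sin (phU a))).
  { exists 10. intros a Ha. symmetry. apply y3_eq. lra. }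
  eapply Lval. lim_tac. rewrite cos_neg. field.
Qed.

End Main.

Theorem proposition6p1 (uh vh : R) (phi : R -> R -> R)
  (Hphi : forall a : R, 0 < a -> is_phi a (phi a)) :
  is_lim (fun a => y1 a (phi a) (uh / a) ((4 * ln a + vh) / (2 * a))) p_infty
    (sin uh / 4 * exp (vh / 2)) /\
  is_lim (fun a => y2 a (phi a) (uh / a) ((4 * ln a + vh) / (2 * a))) p_infty 0 /\
  is_lim (fun a => y3 a (phi a) (uh / a) ((4 * ln a + vh) / (2 * a))) p_infty
    (- cos uh / 4 * exp (vh / 2)).
Proof. exact (main_lims uh vh phi Hphi). Qed.
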